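(* Let $(P,\mathit{dist})$ be a finite metric space of doubling dimension $d$, let $S\subseteq P$ be non-empty with $n=|S|$, let $\mu\ge 1$ be a real number (possibly depending on $n$), and set $c=2(8\mu)^d$. Assume $n\ge c+1$. Then Algorithm $\mathrm{SepAnn}(S,n,d,\mu,c)$ has expected running time $O(cn)$, and it returns a point $p\in S$ and a real number $R'>0$ such that (1) $|\mathit{ball}_S(p,R')|\ge n/c$, and (2) $|\mathit{ball}_S(p,\mu R')|\le n/2$.
   Context: For $X\subseteq P$, $p\in P$ and $R\ge 0$, $\mathit{ball}_X(p,R)=\{x\in X:\mathit{dist}(p,x)\le R\}$. The doubling dimension of $(P,\mathit{dist})$ is $\log_2\lambda$, where $\lambda$ is the smallest integer such that for every $p\in P$ and real $R>0$, $\mathit{ball}_P(p,R)$ is covered by at most $\lambda$ balls $\mathit{ball}_P(q,R/2)$ with $q\in P$. Distances are obtained from an oracle in $O(1)$ time. Algorithm $\mathrm{SepAnn}(S,n,d,\mu,c)$: repeat the following: choose $p$ uniformly at random from $S$; compute $R_p=\min\{r>0: |\mathit{ball}_S(p,r)|\ge n/c\}$ (as the $\lceil n/c\rceil$-th smallest among the distances from $p$ to all points of $S$, including $p$ itself, using expected-linear-time selection); compute $|\mathit{ball}_S(p,\mu R_p)|$ by scanning these distances; until $|\mathit{ball}_S(p,\mu R_p)|\le n/2$. Then return $p$ and $R'=R_p$. *)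

(* Defs.v *)
From HB Require Import structures.
From mathcomp Require Import all_boot all_order all_algebra.
From mathcomp Require Import all_classical all_reals all_analysis.
Set Implicit Arguments. Unset Strict Implicit. Unset Printing Implicit Defensive.
Import Order.TTheory GRing.Theory Num.Theory.
Local Open Scope ring_scope.

Section Defs.
Variables (R : realType) (P : finType) (dist : P -> P -> R).

Definition is_metric : Prop :=
  [/\ forall x y, dist x y = 0 <-> x = y,
      forall x y, dist x y = dist y x &
      forall x y z, dist x z <= dist x y + dist y z].

Definition ballX (X : {set P}) (p : P) (r : R) : {set P} :=
  [set x in X | dist p x <= r].

Definition covered_by (p : P) (r : R) (k : nat) : Prop :=
  exists Q : {set P}, (#|Q| <= k)%N /\
    ballX [set: P]%SET p r \subset \bigcup_(q in Q) ballX [set: P]%SET q (r / 2).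

Definition is_doubling_const (lam : nat) : Prop :=
  (forall p r, 0 < r -> covered_by p r lam) /\
  (forall k : nat, (forall p r, 0 < r -> covered_by p r k) -> (lam <= k)%N).

Definition is_doubling_dim (d : R) : Prop :=
  exists lam, is_doubling_const lam /\ d = ln (lam%:R) / ln 2.

(* R_p: the ceil(n/c)-th smallest among the distances from p to all points
   of S (including p itself), n = |S| *)
Definition sepann_Rp (S : {set P}) (c : R) (p : P) : R :=
  let k := `|Num.ceil (#|S|%:R / c)|%N in
  nth 0 (sort <=%R [seq dist p x | x <- enum S]) k.-1.

(* the points p whose iteration stops the repeat loop:
   |ball_S(p, mu R_p)| <= n/2 *)
Definition sepann_good (S : {set P}) (mu c : R) : {set P} :=
  [set p in S | (#|ballX S p (mu * sepann_Rp S c p)|%:R : R) <= #|S|%:R / 2].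

(* Expected running time of SepAnn: each iteration draws p uniformly from S
   and costs Theta(n) (linear-time selection plus a scan); we charge n per
   iteration.  With success probability q = |good|/n per iteration, the loop
   runs exactly k+1 iterations with probability (1-q)^k q. *)
Definition sepann_success_prob (S : {set P}) (mu c : R) : R :=
  #|sepann_good S mu c|%:R / #|S|%:R.

Definition sepann_expected_time (S : {set P}) (mu c : R) : \bar R :=
  let q := sepann_success_prob S mu c in
  (\sum_(0 <= k <oo) ((#|S|%:R * k.+1%:R * (1 - q) ^+ k * q)%:E))%E.

End Defs.

(* Main.v *)
Require Import Defs.
From HB Require Import structures.
From mathcomp Require Import all_boot all_order all_algebra.
From mathcomp Require Import all_classical all_reals all_analysis.
From mathcomp Require Import zify ring lra.
Import Order.TTheory GRing.Theory Num.Theory.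
Local Open Scope ring_scope.
Require Import Defs.

Lemma card_bigcup_le (T I : finType) (Q : {set I}) (F : I -> {set T}) :
  (#|\bigcup_(q in Q) F q| <= \sum_(q in Q) #|F q|)%N.
Proof.
apply: (big_ind2 (fun (A : {set T}) (n : nat) => #|A| <= n)%N).
- by rewrite cards0.
- move=> A a B b HA HB; rewrite cardsU; apply: leq_trans (leq_subr _ _) _; exact: leq_add.
- by [].
Qed.

Lemma count_sorted_ge (R : realType) (s : seq R) (k : nat) (t : R) :
  sorted <=%R s -> (k < size s)%N -> nth 0 s k <= t -> (k < count (fun v : R => (v <= t)%R) s)%N.
Proof.
move=> ss ks kt.
rewrite -(cat_take_drop k.+1 s) count_cat.
have -> : count (fun v : R => (v <= t)%R) (take k.+1 s) = size (take k.+1 s).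
  apply/eqP; rewrite -all_count; apply/(all_nthP 0) => i Hi.
  rewrite size_takel // in Hi.
  rewrite nth_take //; apply: le_trans kt.
  apply: (sorted_leq_nth le_trans lexx) => //; rewrite ?inE /=; move: Hi ks; set n := size s; lia.
rewrite size_takel //; lia.
Qed.

Lemma count_sorted_lt (R : realType) (s : seq R) (k : nat) (t : R) :
  sorted <=%R s -> (k < size s)%N -> t < nth 0 s k -> (count (fun v : R => (v <= t)%R) s <= k)%N.
Proof.
move=> ss ks kt.
rewrite -(cat_take_drop k s) count_cat.
have -> : count (fun v : R => (v <= t)%R) (drop k s) = 0%N.
  apply/eqP; rewrite -leqn0 leqNgt -has_count; apply/(has_nthP 0) => -[i Hi Hv].
  rewrite size_drop in Hi; rewrite nth_drop in Hv.
  have : nth 0 s k <= nth 0 s (k + i).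
    apply: (sorted_leq_nth le_trans lexx) => //; rewrite ?inE /=; move: Hi ks; set n := size s; lia.
  by move=> H; move: (le_lt_trans (le_trans H Hv) kt); rewrite ltxx.
have := count_size (fun v : R => (v <= t)%R) (take k s); rewrite size_take ks addn0.
by [].
Qed.

Lemma card_filter_set (T : finType) (S : {set T}) (Q : pred T) :
  #|[set x in S | Q x]| = count Q (enum S).
Proof.
rewrite -size_filter -(card_uniqP _).
  apply: eq_card => x; rewrite !inE mem_filter mem_enum; by rewrite andbC.
by rewrite filter_uniq // enum_uniq.
Qed.

Lemma k_facts (R : realType) (n : nat) (c : R) : 1 <= c -> c + 1 <= n%:R ->
  let k := `|Num.ceil (n%:R / c)|%N in
  [/\ (2 <= k)%N, (k <= n)%N, n%:R / c <= k%:R & k%:R - 1 < n%:R / c].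
Proof.
move=> c1 cn k.
have c0 : 0 < c by lra.
set x := n%:R / c.
have x1 : 1 < x by rewrite /x ltr_pdivlMr // mul1r; lra.
have xn : x <= n%:R by rewrite /x ler_pdivrMr // ler_peMr //; lra.
have z0 : 0 <= Num.ceil x by rewrite ceil_ge0; lra.
have hk : k%:Z = Num.ceil x by rewrite /k gez0_abs.
have kR : k%:R = (Num.ceil x)%:~R :> R by rewrite -hk -pmulrn.
split.
- by rewrite -ltz_nat hk ceil_gt_int.
- by rewrite -lez_nat hk ceil_le_int -pmulrn.
- by rewrite kR ceil_ge.
- have := ceilB1_lt x; rewrite rmorphB /= -kR; lra.
Qed.


Lemma card_ball_count (R : realType) (P : finType) (dist : P -> P -> R) (S : {set P}) (p : P) (t : R) :
  #|ballX dist S p t| = count (fun v : R => (v <= t)%R) (sort <=%R [seq dist p x | x <- enum S]).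
Proof.
rewrite /ballX card_filter_set.
rewrite (permP (permEl (perm_sort _ _))) count_map.
by [].
Qed.

Lemma size_sortS (R : realType) (P : finType) (dist : P -> P -> R) (S : {set P}) p :
  size (sort <=%R [seq dist p x | x <- enum S]) = #|S|.
Proof. by rewrite size_sort size_map cardE. Qed.

Lemma Rp_ge (R : realType) (P : finType) (dist : P -> P -> R) (S : {set P}) (c : R) (p : P) :
  (1 <= `|Num.ceil (#|S|%:R / c)|%N <= #|S|)%N ->
  (`|Num.ceil (#|S|%:R / c)|%N <= #|ballX dist S p (sepann_Rp dist S c p)|)%N.
Proof.
rewrite card_ball_count /sepann_Rp /=.
set k := `|Num.ceil (#|S|%:R / c)|%N.
clearbody k; case: k => [|k] // /andP[_ kn] /=.
have := @count_sorted_ge R (sort <=%R [seq dist p x | x <- enum S]) k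
  (nth 0 (sort <=%R [seq dist p x | x <- enum S]) k).
rewrite size_sortS sort_sorted; last exact: le_total.
by move=> /(_ isT kn (lexx _)).
Qed.

Lemma Rp_lt (R : realType) (P : finType) (dist : P -> P -> R) (S : {set P}) (c : R) (p : P) (t : R) :
  (1 <= `|Num.ceil (#|S|%:R / c)|%N <= #|S|)%N ->
  t < sepann_Rp dist S c p ->
  (#|ballX dist S p t| <= (`|Num.ceil (#|S|%:R / c)|%N).-1)%N.
Proof.
rewrite card_ball_count /sepann_Rp /=.
set k := `|Num.ceil (#|S|%:R / c)|%N.
clearbody k; case: k => [|k] // /andP[_ kn] /= tlt.
apply: count_sorted_lt => //.
  by apply: sort_sorted; exact: le_total.
by rewrite size_sortS.
Qed.

Lemma cover_iter (R : realType) (P : finType) (dist : P -> P -> R) (lam : nat) :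
  (forall p (r : R), 0 < r -> covered_by dist p r lam) ->
  forall (m : nat) (p : P) (r : R), 0 < r -> exists Q : {set P}, (#|Q| <= lam ^ m)%N /\
    ballX dist [set: P] p r \subset \bigcup_(q in Q) ballX dist [set: P] q (r / 2 ^+ m).
Proof.
move=> cov; elim=> [|m IH] p r r0.
  exists [set p]; split; first by rewrite cards1.
  apply/fintype.subsetP => x xb; apply/bigcupP; exists p; first by rewrite inE.
  by rewrite expr0 divr1.
have [Q [HQ sub]] := IH p r r0.
have rm : 0 < r / 2 ^+ m by rewrite divr_gt0 // exprn_gt0.
have H1 : forall q, exists Q' : {set P}, (#|Q'| <= lam)%N /\
   ballX dist [set: P] q (r / 2 ^+ m) \subset
   \bigcup_(q' in Q') ballX dist [set: P] q' (r / 2 ^+ m / 2).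
  by move=> q; exact: cov.
have [f Hf] := choice H1.
exists (\bigcup_(q in Q) f q); split.
  apply: (leq_trans (card_bigcup_le _ _ Q f)).
  apply: (@leq_trans (\sum_(q in Q) lam)); first by apply: leq_sum => q _; case: (Hf q).
  by rewrite sum_nat_const expnSr leq_mul2r HQ orbT.
apply/fintype.subsetP => x xb.
have /bigcupP [q qQ xq] := fintype.subsetP sub x xb.
have [_ s2] := Hf q.
have /bigcupP [q' q'f xq'] := fintype.subsetP s2 x xq.
apply/bigcupP; exists q'; first by apply/bigcupP; exists q.
by rewrite exprSr invfM mulrA.
Qed.

Lemma lam_pow (R : realType) (lam m : nat) (mu d : R) : 1 <= mu -> 2 ^+ m <= 8 * mu ->
  d = ln (lam%:R : R) / ln 2 -> (lam ^ m)%:R <= (8 * mu) `^ d.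
Proof.
move=> mu1 hm dE.
have l2 : 0 < ln (2 : R) by apply: ln_gt0; lra.
have m8 : 0 < 8 * mu by lra.
case: lam dE => [|lam] dE.
  rewrite ln0 // mul0r in dE; rewrite dE powRr0.
  by case: m {hm} => [|m]; rewrite ?expn0 ?exp0n.
have lpos : 0 < (lam.+1%:R : R) by rewrite ltr0n.
rewrite natrX -(lnK (x:=lam.+1%:R ^+ m)); last by rewrite posrE exprn_gt0.
rewrite lnXn // /powR; have -> : (8 * mu == 0) = false by apply/negbTE; rewrite gt_eqF.
rewrite ler_expR dE.
have la : 0 <= ln (lam.+1%:R : R) by apply: ln_ge0; rewrite ler1n.
have h2 : ln (2 ^+ m : R) <= ln (8 * mu).
  by rewrite ler_ln // posrE // exprn_gt0.
rewrite lnXn // in h2.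
have -> : ln (lam.+1%:R : R) *+ m = ln (lam.+1%:R : R) / ln 2 * (ln 2 *+ m).
  by rewrite mulrnAr divfK // gt_eqF.
apply: ler_wpM2l => //; exact: divr_ge0 la (ltW l2).
Qed.

Lemma geo_id (R : realType) (x : R) (N : nat) :
  (1 - x) ^+ 2 * \sum_(0 <= k < N) k.+1%:R * x ^+ k =
  1 - N.+1%:R * x ^+ N + N%:R * x ^+ N.+1.
Proof.
elim: N => [|N IH].
  by rewrite big_geq // mulr0 expr0 mul1r expr1 mul0r; lra.
rewrite big_nat_recr //= mulrDr IH.
rewrite -!natr1 !exprS; ring.
Qed.

Theorem lemma3 (R : realType) :
  exists K : R, 0 < K /\
  forall (P : finType) (dist : P -> P -> R) (S : {set P}) (d mu c : R),
    is_metric dist ->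
    is_doubling_dim dist d ->
    (0 < #|S|)%N ->
    1 <= mu ->
    c = 2 * (8 * mu) `^ d ->
    c + 1 <= #|S|%:R ->
    (* the loop terminates with probability one ... *)
    0 < sepann_success_prob dist S mu c /\
    (* ... and the expected running time is O(c n) *)
    (sepann_expected_time dist S mu c <= (K * c * #|S|%:R)%:E)%E /\
    (* every possible output (p, R' = R_p) has the required properties *)
    (forall p, p \in sepann_good dist S mu c ->
       let R' := sepann_Rp dist S c p in
       [/\ p \in S, 0 < R',
           #|S|%:R / c <= #|ballX dist S p R'|%:R &
           (#|ballX dist S p (mu * R')|%:R : R) <= #|S|%:R / 2]).
Proof.
exists 1; split => //.
move=> P dist S d mu c [d0 dsym dtri] [lam [[cov _] dE]] Sgt0 mu1 cE cn.
have dd : forall x, dist x x = 0 by move=> x; apply/(d0 x x).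
have dist0 : forall x y, 0 <= dist x y.
  by move=> x y; have := dtri x y x; rewrite dd (dsym y x); lra.
have l2 : 0 < ln (2 : R) by apply: ln_gt0; lra.
have m8 : 0 < 8 * mu by lra.
have d_ge0 : 0 <= d.
  rewrite dE; apply: divr_ge0 (ltW l2).
  case: lam {cov dE} => [|lam]; first by rewrite ln0.
  by apply: ln_ge0; rewrite ler1n.
have pw1 : 1 <= (8 * mu) `^ d.
  rewrite /powR; have -> : (8 * mu == 0) = false by apply/negbTE; rewrite gt_eqF.
  rewrite -[X in X <= _]expR0 ler_expR; apply: mulr_ge0 => //; apply: ln_ge0; lra.
have c1 : 1 <= c by rewrite cE; lra.
have c0 : 0 < c by lra.
have [k2 kn kge klt] := k_facts _ _ _ c1 cn.
set K := `|Num.ceil (#|S|%:R / c)|%N in k2 kn kge klt.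
have K0 : (0 < K)%N by apply: leq_trans k2.
have k1n : (1 <= K <= #|S|)%N by rewrite K0 kn.
have Rp_pos : forall y, y \in S -> 0 < sepann_Rp dist S c y.
  move=> y yS; rewrite ltNge; apply/negP => Rle.
  have := Rp_ge _ _ dist S c y k1n; rewrite -/K.
  have sub : ballX dist S y (sepann_Rp dist S c y) \subset [set y].
    apply/fintype.subsetP => x; rewrite !inE => /andP[_ dx].
    have dx0 : dist y x = 0 by apply/eqP; rewrite eq_le dist0 (le_trans dx Rle).
    by rewrite eq_sym; apply/eqP; apply/(d0 y x).
  have := subset_leq_card sub; rewrite cards1 => h1 h2.
  by have := leq_trans k2 (leq_trans h2 h1).
have Rp_le : forall y t, (K <= #|ballX dist S y t|)%N -> sepann_Rp dist S c y <= t.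
  move=> y t h; rewrite leNgt; apply/negP => lt.
  have := leq_trans h (Rp_lt _ _ dist S c y _ k1n lt); rewrite -/K.
  by rewrite leqNgt ltn_predL K0.
have [x0 x0S] := card_gt0P Sgt0.
have := arg_minP (I:=P) (i0:=x0) (P:=fun i => i \in S)
  (fun i => sepann_Rp dist S c i) x0S.
case=> p0 p0S p0min.
set r := sepann_Rp dist S c p0.
rewrite -/r in p0min.
have r0 : 0 < r := Rp_pos p0 p0S.
have [m [m1 m2]] : exists m, 4 * mu < 2 ^+ m /\ 2 ^+ m <= 8 * mu.
  have ex : exists m, 4 * mu < (2 : R) ^+ m.
    exists (Num.trunc (4 * mu)).+1.
    apply: lt_le_trans (truncnS_gt _) _.
    rewrite -natrX ler_nat; apply: ltnW; exact: ltn_expl.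
  case: (ex_minnP ex) => m hm hmin.
  exists m; split => //.
  case: m hm hmin => [|m] hm hmin; first by rewrite expr0 in hm; lra.
  rewrite exprS.
  have : ~~ (4 * mu < (2 : R) ^+ m).
    by apply/negP => h; have := hmin m h; rewrite ltnn.
  rewrite -leNgt; lra.
have lamc : (lam ^ m)%:R <= c / 2.
  by rewrite cE mulrC mulrA mulVf ?mul1r; [exact: lam_pow | lra].
have claim : forall y, y \in ballX dist S p0 r -> y \in sepann_good dist S mu c.
  move=> y; rewrite inE => /andP[yS dy].
  rewrite inE yS /=.
  have Ry : sepann_Rp dist S c y <= 2 * r.
    apply: Rp_le; apply: leq_trans (Rp_ge _ _ dist S c p0 k1n) (subset_leq_card _).
    apply/fintype.subsetP => x; rewrite !inE => /andP[xS dx]; rewrite xS /=.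
    rewrite -/r in dx; have := dtri y p0 x; rewrite (dsym y p0); lra.
  have r2 : 0 < 2 * mu * r by apply: mulr_gt0 => //; lra.
  have [Q [HQ sub]] := cover_iter _ _ _ _ cov m y _ r2.
  set rho := 2 * mu * r / 2 ^+ m in sub.
  have p2 : 0 < (2 : R) ^+ m by apply: exprn_gt0.
  have rhor : 2 * rho < r.
    have -> : 2 * rho = (4 * mu * r) / 2 ^+ m by rewrite /rho mulrA; congr (_ / _); ring.
    rewrite ltr_pdivrMr //.
    have : 4 * mu * r < 2 ^+ m * r by rewrite ltr_pM2r.
    lra.
  have cardQ : forall q, (#|ballX dist S q rho| <= K.-1)%N.
    move=> q; case: (set_0Vmem (ballX dist S q rho)) => [-> | [x xb]].
      by rewrite cards0.
    have xS : x \in S by move: xb; rewrite inE => /andP[].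
    have hsub : ballX dist S q rho \subset ballX dist S x (2 * rho).
      apply/fintype.subsetP => z; move: xb; rewrite !inE => /andP[_ dqx] /andP[zS dqz].
      rewrite zS /=; have := dtri x q z; rewrite (dsym x q); lra.
    have hlt : 2 * rho < sepann_Rp dist S c x by exact: lt_le_trans rhor (p0min x xS).
    exact: leq_trans (subset_leq_card hsub) (Rp_lt _ _ dist S c x (2 * rho) k1n hlt).
  have hcard : (#|ballX dist S y (mu * sepann_Rp dist S c y)| <= #|Q| * K.-1)%N.
    have hsub2 : ballX dist S y (mu * sepann_Rp dist S c y)
      \subset \bigcup_(q in Q) ballX dist S q rho.
      apply/fintype.subsetP => x; rewrite inE => /andP[xS dx].
      have xb : x \in ballX dist [set: P] y (2 * mu * r).
        rewrite !inE /=; apply: le_trans dx _.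
        have : mu * sepann_Rp dist S c y <= mu * (2 * r) by apply: ler_wpM2l => //; lra.
        lra.
      have /bigcupP [q qQ xq] := fintype.subsetP sub x xb.
      apply/bigcupP; exists q => //.
      by move: xq; rewrite !inE xS /=.
    apply: (leq_trans (subset_leq_card hsub2)).
    apply: (leq_trans (card_bigcup_le _ _ Q _)).
    rewrite -sum_nat_const; apply: leq_sum => q _; exact: cardQ.
  have := hcard; rewrite -(ler_nat R) natrM => hc.
  have kk : (K.-1)%:R < #|S|%:R / c :> R.
    by move: klt; rewrite -(prednK K0) -natr1 addrK.
  have kk0 : 0 <= (K.-1)%:R :> R by [].
  have HQ' : #|Q|%:R <= (lam ^ m)%:R :> R by rewrite ler_nat.
  have h1 : #|Q|%:R * (K.-1)%:R <= c / 2 * (K.-1)%:R :> R.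
    by apply: ler_wpM2r => //; lra.
  have h2 : c / 2 * (K.-1)%:R <= c / 2 * (#|S|%:R / c) :> R.
    by apply: ler_wpM2l; [lra | exact: ltW].
  have h3 : c / 2 * (#|S|%:R / c) = #|S|%:R / 2 :> R by field; rewrite gt_eqF.
  lra.
have goodS : sepann_good dist S mu c \subset S.
  by apply/fintype.subsetP => x; rewrite inE => /andP[].
have goodbig : (K <= #|sepann_good dist S mu c|)%N.
  apply: leq_trans (Rp_ge _ _ dist S c p0 k1n) (subset_leq_card _).
  by apply/fintype.subsetP => y /claim.
set q := sepann_success_prob dist S mu c.
have n0 : 0 < #|S|%:R :> R by rewrite ltr0n.
have gS : #|sepann_good dist S mu c|%:R <= #|S|%:R :> R.
  by rewrite ler_nat; apply: subset_leq_card.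
have gK : #|S|%:R / c <= #|sepann_good dist S mu c|%:R :> R.
  by apply: le_trans kge _; rewrite ler_nat.
have qc : 1 <= q * c.
  rewrite /q /sepann_success_prob mulrAC ler_pdivlMr // mul1r.
  by rewrite -ler_pdivrMr.
have q0 : 0 < q.
  rewrite /q /sepann_success_prob divr_gt0 //.
  apply: lt_le_trans gK; exact: divr_gt0.
have q1 : q <= 1 by rewrite /q /sepann_success_prob ler_pdivrMr // mul1r.
split => //; split.
  rewrite /sepann_expected_time -/q.
  apply: lime_le.
    apply: is_cvg_nneseries => k _ _; rewrite lee_fin.
    apply: mulr_ge0; last exact: ltW.
    apply: mulr_ge0; first exact: mulr_ge0.
    apply: exprn_ge0; lra.
  apply: nearW => N; rewrite sumEFin lee_fin.
  have -> : \sum_(0 <= k < N) (#|S|%:R * k.+1%:R * (1 - q) ^+ k * q) =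
            (#|S|%:R * q) * \sum_(0 <= k < N) (k.+1%:R * (1 - q) ^+ k) :> R.
    rewrite mulr_sumr; apply: eq_bigr => k _; ring.
  have := geo_id _ (1 - q) N.
  have -> : 1 - (1 - q) = q by ring.
  set T := \sum_(0 <= k < N) _.
  have T0 : 0 <= T.
    by apply: sumr_ge0 => k _; apply: mulr_ge0 => //; apply: exprn_ge0; lra.
  have hx : 0 <= (1 - q) ^+ N * (N.+1%:R - N%:R * (1 - q)).
    apply: mulr_ge0; first by apply: exprn_ge0; lra.
    rewrite -natr1; have : N%:R * (1 - q) <= N%:R :> R.
      by rewrite ler_piMr //; lra.
    lra.
  have -> : 1 - N.+1%:R * (1 - q) ^+ N + N%:R * (1 - q) ^+ N.+1 =
            1 - (1 - q) ^+ N * (N.+1%:R - N%:R * (1 - q)) :> R.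
    by rewrite exprSr; ring.
  move=> hT.
  have hqT : q ^+ 2 * T <= 1 by lra.
  have hqT2 : q * T <= c.
    have e1 : q * T <= q * T * (q * c) by rewrite ler_peMr // mulr_ge0 // ltW.
    have e2 : q * T * (q * c) = (q ^+ 2 * T) * c by rewrite expr2; ring.
    have e3 : (q ^+ 2 * T) * c <= c by rewrite ler_piMl // ?ltW // mulr_ge0 // exprn_ge0 // ltW.
    lra.
  have : #|S|%:R * q * T <= #|S|%:R * c.
    by rewrite -mulrA; apply: ler_wpM2l => //; exact: ltW.
  lra.
move=> p pg /=.
have pS : p \in S by move: pg; rewrite inE => /andP[].
split => //.
- exact: Rp_pos.
- apply: le_trans kge _; rewrite ler_nat; exact: Rp_ge.
- by move: pg; rewrite inE => /andP[].
Qed.
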